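(* Let $f:G\to H$, $f':G'\to H'$, $\varphi:G\to G'$, $\psi:H\to H'$ and $\xi:H'\to H$ be group homomorphisms such that $f'\circ\varphi=\psi\circ f$ and $\psi\circ\xi=\mathrm{id}_{H'}$. If $\xi$ is surjective or $f'$ does not admit a global section, then $\mathrm{sec}(f)\geq \mathrm{sec}(f')$. Moreover, if $\varphi$ is an isomorphism and $\xi$ is surjective, then $\mathrm{sec}(f)=\mathrm{sec}(f')$.
   Context: For a homomorphism $f:G\to H$ and a subgroup $L\le H$, a local section of $f$ on $L$ is a homomorphism $s:L\to G$ with $f\circ s=\mathrm{incl}_L$ (the inclusion $L\hookrightarrow H$); a global section is a local section on $L=H$. The sectional number $\mathrm{sec}(f)$ is the least positive integer $m$ such that there exist proper subgroups $H_1,\ldots,H_m$ of $H$ with $H=H_1\cup\cdots\cup H_m$ and such that $f$ admits a local section on each $H_i$; $\mathrm{sec}(f)=\infty$ if no such $m$ exists. *)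

(* Defs.v *)
From mathcomp Require Import all_boot monoid.
From mathcomp Require Import boolp.
Set Implicit Arguments. Unset Strict Implicit. Unset Printing Implicit Defensive.
Local Open Scope group_scope.

Definition is_hom (G H : groupType) (f : G -> H) : Prop :=
  forall x y : G, f (x * y) = f x * f y.

Definition is_subgroup (H : groupType) (L : H -> Prop) : Prop :=
  [/\ L 1, (forall x y, L x -> L y -> L (x * y)) & (forall x, L x -> L x^-1)].

Definition proper_subgroup (H : groupType) (L : H -> Prop) : Prop :=
  is_subgroup L /\ exists x, ~ L x.

(* s is a local section of f on L: a homomorphism L -> G (represented by a function
   H -> G whose values outside L are irrelevant) with f (s x) = x for x in L *)
Definition local_section (G H : groupType) (f : G -> H) (L : H -> Prop) (s : H -> G) : Prop :=
  (forall x y, L x -> L y -> s (x * y) = s x * s y) /\ (forall x, L x -> f (s x) = x).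

Definition has_local_section (G H : groupType) (f : G -> H) (L : H -> Prop) : Prop :=
  exists s, local_section f L s.

Definition has_global_section (G H : groupType) (f : G -> H) : Prop :=
  has_local_section f (fun _ => True).

Definition sec_cover (G H : groupType) (f : G -> H) (m : nat) : Prop :=
  (0 < m)%N /\
  exists Hs : nat -> H -> Prop,
    (forall i, (i < m)%N -> proper_subgroup (Hs i) /\ has_local_section f (Hs i)) /\
    (forall x, exists2 i, (i < m)%N & Hs i x).

(* sectional number: Some m = least such m, None = infinity *)
Definition sec (G H : groupType) (f : G -> H) : option nat :=
  match pselect (exists m, `[< sec_cover f m >]) with
  | left ex => Some (ex_minn ex)
  | right _ => None
  end.

Definition ext_le (a b : option nat) : Prop :=
  match a, b with
  | _, None => True
  | None, Some _ => False
  | Some m, Some n => (m <= n)%N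
  end.

(* Main.v *)
Require Import Defs.
From mathcomp Require Import all_boot monoid.
From mathcomp Require Import boolp.
From Stdlib Require Import Classical.
Set Implicit Arguments.
Local Open Scope group_scope.

Lemma hom1 (G H : groupType) (f : G -> H) : is_hom f -> f 1 = 1.
Proof.
move=> hf; apply: (@mulIg _ (f 1)).
by rewrite -hf !mul1g.
Qed.

Lemma homV (G H : groupType) (f : G -> H) : is_hom f -> forall x, f x^-1 = (f x)^-1.
Proof.
move=> hf x; apply: (@mulIg _ (f x)).
by rewrite -hf mulVg mulVg hom1.
Qed.

Lemma sec_spec (G H : groupType) (f : G -> H) :
  match sec f with
  | Some m => sec_cover f m /\ forall k, sec_cover f k -> (m <= k)%N
  | None => forall m, ~ sec_cover f m
  end.
Proof.
rewrite /sec; case: pselect => [ex|nex].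
  case: ex_minnP => m /asboolP Hm Hmin; split => // k Hk; apply: Hmin; exact/asboolP.
move=> m Hm; apply: nex; exists m; exact/asboolP.
Qed.

Lemma sec_le (G H G' H' : groupType) (f : G -> H) (f' : G' -> H') :
  (forall m, sec_cover f m -> sec_cover f' m) -> ext_le (sec f') (sec f).
Proof.
move=> hm; have := @sec_spec _ _ f; have := @sec_spec _ _ f'.
case: (sec f) => [m|]; case: (sec f') => [n|] //=.
- by move=> [_ Hn] [Hm _]; apply: Hn; apply: hm.
- by move=> Hn [Hm _]; apply: (Hn m); apply: hm.
Qed.

Theorem proposition2p9 (G H G' H' : groupType)
  (f : G -> H) (f' : G' -> H') (phi : G -> G') (psi : H -> H') (xi : H' -> H)
  (hf : is_hom f) (hf' : is_hom f') (hphi : is_hom phi) (hpsi : is_hom psi) (hxi : is_hom xi)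
  (hcomm : forall g, f' (phi g) = psi (f g))
  (hret : forall h', psi (xi h') = h') :
  ((forall h, exists h', xi h' = h) \/ ~ has_global_section f' -> ext_le (sec f') (sec f)) /\
  ((exists phi_inv : G' -> G, (forall g, phi_inv (phi g) = g) /\ (forall g', phi (phi_inv g') = g')) ->
   (forall h, exists h', xi h' = h) -> sec f = sec f').
Proof.
have part1 : (forall h, exists h', xi h' = h) \/ ~ has_global_section f' ->
    forall m, sec_cover f m -> sec_cover f' m.
  move=> hyp m [m0 [Hs [HHs Hcov]]]; split => //.
  exists (fun i x => Hs i (xi x)); split; last first.
    by move=> x; have [i im Hi] := Hcov (xi x); exists i.
  move=> i im; have [[[S1 SM SV] [x nx]] [s [sM sS]]] := HHs i im.
  have secK : local_section f' (fun x => Hs i (xi x)) (fun x => phi (s (xi x))).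
    split.
      by move=> a b ha hb; rewrite hxi sM // hphi.
    by move=> a ha; rewrite hcomm sS.
  split; last by exists (fun x => phi (s (xi x))).
  split; first split.
  - by rewrite hom1.
  - by move=> a b ha hb; rewrite hxi; apply: SM.
  - by move=> a ha; rewrite homV //; apply: SV.
  case: hyp => [hsurj|nglob].
    by have [x' ex] := hsurj x; exists x'; rewrite ex.
  apply: NNPP => hall; apply: nglob.
  have Hall : forall y, Hs i (xi y) by move=> y; apply: NNPP => hn; apply: hall; exists y.
  exists (fun x => phi (s (xi x))); split.
    by move=> a b _ _; apply: secK.1; apply: Hall.
  by move=> a _; apply: secK.2; apply: Hall.
split; first by move=> hyp; apply: sec_le; apply: part1.
move=> [phi_inv [pK pK']] hsurj.
have xipsi : forall h, xi (psi h) = h.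
  by move=> h; have [h' <-] := hsurj h; rewrite hret.
have hpinv : is_hom phi_inv.
  move=> a b; rewrite -{1}(pK' a) -{1}(pK' b) -hphi; exact: pK.
have fpinv : forall g', f (phi_inv g') = xi (f' g').
  by move=> g'; rewrite -{2}(pK' g') hcomm xipsi.
have part2 : forall m, sec_cover f' m -> sec_cover f m.
  move=> m [m0 [Hs [HHs Hcov]]]; split => //.
  exists (fun i x => Hs i (psi x)); split; last first.
    by move=> x; have [i im Hi] := Hcov (psi x); exists i.
  move=> i im; have [[[S1 SM SV] [x nx]] [s [sM sS]]] := HHs i im.
  split; last first.
    exists (fun x => phi_inv (s (psi x))); split.
      by move=> a b ha hb; rewrite hpsi sM // hpinv.
    by move=> a ha; rewrite fpinv sS // xipsi.
  split; first split.
  - by rewrite hom1.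
  - by move=> a b ha hb; rewrite hpsi; apply: SM.
  - by move=> a ha; rewrite homV //; apply: SV.
  by exists (xi x); rewrite hret.
have le1 := sec_le (part1 (or_introl hsurj)).
have le2 := sec_le part2.
move: le1 le2; case: (sec f) => [a|]; case: (sec f') => [b|] //=.
by move=> h1 h2; congr Some; apply/eqP; rewrite eqn_leq h1 h2.
Qed.
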